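(* Let $$B_1=\begin{pmatrix}0.1&0\\0&0\end{pmatrix},\qquad B_2=\begin{pmatrix}100&-1000\\ 9.99&-99.9\end{pmatrix},$$ and let $\{I_n\}$ be the stationary Markov chain on $\{1,2\}$ with transition probabilities $p_{12}=p_{21}=0.8$, $p_{11}=p_{22}=0.2$. Let $A_n=B_{I_n}$. Then both $B_1$ and $B_2$ have spectral radius $0.1<1$, yet the top Lyapunov exponent $\lambda=\lim_{n\to\infty}\frac1n\log\|A_n\cdots A_1\|$ of $\{A_n\}$ is strictly positive (it equals $0.2\log 10$). *)

(* Defs.v *)
From HB Require Import structures.
From mathcomp Require Import all_boot all_order all_algebra all_field.
From mathcomp Require Import all_classical all_reals all_analysis.
Set Implicit Arguments.
Unset Strict Implicit.
Unset Printing Implicit Defensive.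
Import Order.TTheory GRing.Theory Num.Theory.
Import numFieldNormedType.Exports.
Local Open Scope ring_scope.
Local Open Scope classical_set_scope.

Definition B1 {F : fieldType} : 'M[F]_2 :=
  \matrix_(i < 2, j < 2)
    match nat_of_ord i, nat_of_ord j with
    | 0%N, 0%N => 1 / 10
    | _, _ => 0
    end.

Definition B2 {F : fieldType} : 'M[F]_2 :=
  \matrix_(i < 2, j < 2)
    match nat_of_ord i, nat_of_ord j with
    | 0%N, 0%N => 100
    | 0%N, _ => - 1000
    | _, 0%N => 999 / 100
    | _, _ => - (999 / 10)
    end.

(* State space {1,2} is encoded as 'I_2 : state 1 <-> ord0, state 2 <-> 1. *)
Definition Bst {F : fieldType} (i : 'I_2) : 'M[F]_2 :=
  if i == ord0 then B1 else B2.

Definition is_spectral_radius (n : nat) (A : 'M[algC]_n.+1) (r : algC) : Prop :=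
  (exists2 l, eigenvalue A l & `|l| = r) /\
  (forall l, eigenvalue A l -> `|l| <= r).

Definition trans {R : realType} (i j : 'I_2) : R :=
  if i == j then 1 / 5 else 4 / 5.

(* (I_n)_{n>=0} is a stationary Markov chain with transition matrix trans:
   its stationary law is necessarily uniform (1/2,1/2), so all finite
   dimensional distributions are prescribed. *)
Definition stationary_markov_chain {d : measure_display} {Omega : measurableType d}
  {R : realType} (P : probability Omega R) (I : nat -> Omega -> 'I_2) : Prop :=
  (forall n (i : 'I_2), measurable (I n @^-1` [set i])) /\
  (forall n (s : 'I_n.+1 -> 'I_2),
     P [set w | forall k : 'I_n.+1, I k w = s k] =
     ((1 / 2) * \prod_(k < n) trans (s (inord k)) (s (inord k.+1)))%:E).

Fixpoint Aprod {Omega : Type} {R : realType} (I : nat -> Omega -> 'I_2)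
  (n : nat) (w : Omega) : 'M[R]_2 :=
  match n with
  | 0%N => 1%:M
  | m.+1 => Bst (I m.+1 w) *m Aprod I m w
  end.

(* Main.v *)
Require Import Defs.
From HB Require Import structures.
From mathcomp Require Import all_boot all_order all_algebra all_field.
From mathcomp Require Import all_classical all_reals all_analysis.
From mathcomp Require Import ring lra zify.
Import Order.TTheory GRing.Theory Num.Theory.
Import numFieldNormedType.Exports.
Local Open Scope ring_scope.
Local Open Scope classical_set_scope.

Lemma mulrow2 (F : fieldType) (v : 'rV[F]_2) (M : 'M[F]_2) j :
  (v *m M) 0 j = v 0 ord0 * M ord0 j + v 0 ord_max * M ord_max j.
Proof.
rewrite mxE !big_ord_recl big_ord0 addr0 /=.
by congr (_ + v 0 _ * M _ j); apply/val_inj.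
Qed.

Lemma B1E (F : fieldType) : (B1 : 'M[F]_2) ord0 ord0 = 1/10 /\ (B1 : 'M[F]_2) ord0 ord_max = 0 /\
  (B1 : 'M[F]_2) ord_max ord0 = 0 /\ (B1 : 'M[F]_2) ord_max ord_max = 0.
Proof. by rewrite !mxE. Qed.
Lemma B2E (F : fieldType) : (B2 : 'M[F]_2) ord0 ord0 = 100 /\ (B2 : 'M[F]_2) ord0 ord_max = -1000 /\
  (B2 : 'M[F]_2) ord_max ord0 = 999/100 /\ (B2 : 'M[F]_2) ord_max ord_max = -(999/10).
Proof. by rewrite !mxE. Qed.

Lemma rv2_neq0 (F : fieldType) (v : 'rV[F]_2) : v != 0 -> v 0 ord0 != 0 \/ v 0 ord_max != 0.
Proof.
move=> vn0; case: (eqVneq (v 0 ord0) 0) => h0; last by left.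
case: (eqVneq (v 0 ord_max) 0) => h1; last by right.
case/eqP: vn0; apply/rowP => j; rewrite mxE.
case: j => [[|[|j]] Hj] //.
- by rewrite -h0; congr (v 0 _); apply/val_inj.
- by rewrite -h1; congr (v 0 _); apply/val_inj.
Qed.

Lemma B1_eig (v : 'rV[algC]_2) a :
  v *m B1 = a *: v -> v != 0 -> a = 0 \/ a = 1/10.
Proof.
move=> H vn0.
have H0 := congr1 (fun M : 'rV_2 => M 0 ord0) H.
have H1 := congr1 (fun M : 'rV_2 => M 0 ord_max) H.
move: H0 H1 => /=; rewrite !mulrow2 !mxE /=.
rewrite !mulr0 ?addr0 ?add0r => E0 E1.
case: (eqVneq a 0) => [->|an0]; [by left|right].
have y0 : v 0 ord_max = 0 by move/esym/eqP: E1; rewrite mulf_eq0 (negPf an0) => /eqP.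
have x0 : v 0 ord0 != 0 by case: (@rv2_neq0 _ v vn0) => // /negP; rewrite y0 eqxx.
by apply: (mulIf x0); rewrite -E0 mulrC.
Qed.

Lemma B2_eig (v : 'rV[algC]_2) a :
  v *m B2 = a *: v -> v != 0 -> a = 0 \/ a = 1/10.
Proof.
move=> H vn0.
have H0 := congr1 (fun M : 'rV_2 => M 0 ord0) H.
have H1 := congr1 (fun M : 'rV_2 => M 0 ord_max) H.
move: H0 H1 => /=; rewrite !mulrow2 !mxE /= => E0 E1.
case: (eqVneq a 0) => [->|an0]; [by left|right].
set x := v 0 ord0 in E0 E1 vn0 *; set y := v 0 ord_max in E0 E1 vn0 *.
have ey : a * y = - 10 * (a * x) by rewrite -E0 -E1; field.
have ey' : y = -10 * x by apply: (mulfI an0); rewrite ey; ring.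
have x0 : x != 0.
  apply/eqP => x0; move: ey'; rewrite x0 mulr0 => y0.
  by case: (@rv2_neq0 _ v vn0); rewrite -/x -/y ?x0 ?y0 eqxx.
apply: (mulIf x0); rewrite -E0 ey'; by field.
Qed.


Lemma rowP2 (F : fieldType) (u w : 'rV[F]_2) :
  u 0 ord0 = w 0 ord0 -> u 0 ord_max = w 0 ord_max -> u = w.
Proof.
move=> h0 h1; apply/rowP => j.
case: j => [[|[|j]] Hj] //.
- by rewrite (_ : Ordinal Hj = ord0) //; apply/val_inj.
- by rewrite (_ : Ordinal Hj = ord_max) //; apply/val_inj.
Qed.

Lemma tenth_norm : `|(1/10 : algC)| = 1/10.
Proof. by rewrite ger0_norm. Qed.

Lemma sr_B1 : is_spectral_radius (@B1 algC) (1 / 10).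
Proof.
split.
  exists (1/10); last exact: tenth_norm.
  apply/eigenvalueP; exists (\row_j (if j == ord0 then 1 else 0)).
    by apply: rowP2; rewrite !mulrow2 !mxE /=; ring.
  apply/eqP => /rowP /(_ ord0); rewrite !mxE /=. by move/eqP; rewrite oner_eq0.
move=> l /eigenvalueP [v Hv vn0]; case: (@B1_eig v l Hv vn0) => ->.
  by rewrite normr0.
by rewrite tenth_norm.
Qed.

Lemma sr_B2 : is_spectral_radius (@B2 algC) (1 / 10).
Proof.
split.
  exists (1/10); last exact: tenth_norm.
  apply/eigenvalueP; exists (\row_j (if j == ord0 then 1 else -10)).
    by apply: rowP2; rewrite !mulrow2 !mxE /=; field.
  apply/eqP => /rowP /(_ ord0); rewrite !mxE /=. by move/eqP; rewrite oner_eq0.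
move=> l /eigenvalueP [v Hv vn0]; case: (@B2_eig v l Hv vn0) => ->.
  by rewrite normr0.
by rewrite tenth_norm.
Qed.

Set Implicit Arguments.
Unset Strict Implicit.
Unset Printing Implicit Defensive.

Definition pth n := {ffun 'I_n.+1 -> 'I_2}.
Definition pw {R : realType} n (s : pth n) : R :=
  (1/2) * \prod_(k < n) trans (s (inord k)) (s (inord k.+1)).
Arguments pw {R} n s.
Definition En {R : realType} n (G : pth n -> R) : R := \sum_(s : pth n) pw n s * G s.
Arguments En {R} n G.
Definition chg {R : realType} (a b : 'I_2) : R := if a == b then 0 else 1.
Definition restr n (t : pth n.+1) : pth n := [ffun k : 'I_n.+1 => t (inord k)].
Definition ext n (s : pth n) (b : 'I_2) : pth n.+1 :=
  [ffun k : 'I_n.+2 => if (k < n.+1)%N then s (inord k) else b].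

Lemma ext_inord n (s : pth n) b j : (j <= n)%N -> ext s b (inord j) = s (inord j).
Proof.
move=> hj; rewrite ffunE inordK; last by lia.
have -> : (j < n.+1)%N by lia.
by [].
Qed.

Lemma ext_last n (s : pth n) b : ext s b (inord n.+1) = b.
Proof. by rewrite ffunE inordK ?ltnn //; lia. Qed.

Lemma ext_max n (s : pth n) b : ext s b ord_max = b.
Proof. by rewrite ffunE /= ltnn. Qed.

Lemma restr_inord n (t : pth n.+1) j : (j <= n)%N -> restr t (inord j) = t (inord j).
Proof. by move=> hj; rewrite ffunE inordK //; lia. Qed.

Lemma restr_ext n (s : pth n) b : restr (ext s b) = s.
Proof.
apply/ffunP => k; have := ltn_ord k => hk.
by rewrite ffunE ext_inord ?inord_val //; lia.
Qed.

Lemma ext_restr n (t : pth n.+1) : ext (restr t) (t ord_max) = t.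
Proof.
apply/ffunP => k; rewrite ffunE; case: ifP => hk.
  rewrite ffunE inordK; last by lia.
  by congr (t _); apply/val_inj; rewrite /= !inordK //; lia.
congr (t _); apply/val_inj => /=; move: (ltn_ord k); rewrite ltnS leq_eqVlt hk orbF.
by move/eqP.
Qed.

Lemma pw_ext {R : realType} n (s : pth n) b :
  pw n.+1 (ext s b) = pw n s * trans (s (inord n)) b :> R.
Proof.
rewrite /pw big_ord_recr /= ext_inord // ext_last.
rewrite (eq_bigr (fun k : 'I_n => trans (s (inord k)) (s (inord k.+1)))); first by rewrite mulrA.
by move=> k _; rewrite !ext_inord //; have := ltn_ord k; lia.
Qed.

Lemma En_step {R : realType} n (g : pth n -> R) (h : R -> R) :
  En n.+1 (fun t => g (restr t) * h (chg (t (inord n)) (t (inord n.+1)))) =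
  En n g * (h 0 / 5 + 4 * h 1 / 5).
Proof.
rewrite /En (reindex (fun p : pth n * 'I_2 => ext p.1 p.2)) /=; last first.
  exists (fun t => (restr t, t ord_max)) => [[s b] _|t _] /=.
    by rewrite restr_ext ext_max.
  exact: ext_restr.
rewrite -(pair_big xpredT xpredT (fun s b => pw n.+1 (ext s b) *
   (g (restr (ext s b)) * h (chg (ext s b (inord n)) (ext s b (inord n.+1)))))) /=.
rewrite big_distrl /=; apply: eq_bigr => s _.
rewrite !big_ord_recl big_ord0 addr0 /=.
rewrite !pw_ext !restr_ext !ext_last !ext_inord //.
rewrite /trans /chg.
have -> : lift ord0 ord0 = (1 : 'I_2) by apply/val_inj.
by case: (s (inord n)) => [[|[|?]] ?] //=; ring.
Qed.

Lemma En_ext {R : realType} n (F G : pth n -> R) : (forall s, F s = G s) -> En n F = En n G.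
Proof. by move=> h; apply: eq_bigr => s _; rewrite h. Qed.
Arguments En_ext : clear implicits.

Lemma EnD {R : realType} n (F G : pth n -> R) :
  En n (fun s => F s + G s) = En n F + En n G.
Proof. by rewrite /En -big_split; apply: eq_bigr => s _; rewrite mulrDr. Qed.

Lemma En0_one {R : realType} : En 0 (fun _ => 1) = 1 :> R.
Proof.
rewrite /En /pw (eq_bigr (fun _ => 1/2)); last by move=> s _; rewrite big_ord0 !mulr1.
by rewrite sumr_const card_ffun !card_ord /=; rewrite -mulr_natl; field.
Qed.

Definition Yp {R : realType} n (s : pth n) : R :=
  \sum_(k < n) (chg (s (inord k)) (s (inord k.+1)) - 4/5).

Lemma Yp_step {R : realType} n (t : pth n.+1) :
  Yp t = Yp (restr t) + (chg (t (inord n)) (t (inord n.+1)) - 4/5) :> R.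
Proof.
rewrite /Yp big_ord_recr /=; congr (_ + _).
by apply: eq_bigr => k _; rewrite !restr_inord //; have := ltn_ord k; lia.
Qed.

Lemma Yp0 {R : realType} (s : pth 0) : Yp s = 0 :> R.
Proof. by rewrite /Yp big_ord0. Qed.

Lemma mom0 {R : realType} n : En n (fun _ => 1) = 1 :> R.
Proof.
elim: n => [|n IH]; first exact: En0_one.
rewrite (En_ext R n.+1 (fun _ => 1) (fun t => (fun _ => 1) (restr t) * (fun _ : R => 1) (chg (t (inord n)) (t (inord n.+1)))));
  last by move=> s; rewrite mulr1.
by rewrite (En_step (fun _ => 1) (fun _ : R => 1)) IH; field.
Qed.

Lemma mom1 {R : realType} n : En n (fun s => Yp s) = 0 :> R.
Proof.
elim: n => [|n IH]; first by rewrite /En big1 // => s _; rewrite Yp0 mulr0.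
rewrite (En_ext R n.+1 (fun s => Yp s) (fun t => (fun s => Yp s) (restr t) * (fun _ : R => 1) (chg (t (inord n)) (t (inord n.+1)))
   + (fun _ => 1) (restr t) * (fun z => z - 4/5) (chg (t (inord n)) (t (inord n.+1)))));
  last by move=> s; rewrite Yp_step; ring.
by rewrite EnD (En_step (fun s => Yp s) (fun _ : R => 1)) (En_step (fun _ => 1) (fun z : R => z - 4/5)) IH mom0; field.
Qed.

Lemma mom2 {R : realType} n : En n (fun s => Yp s ^+ 2) = 4 / 25 * n%:R :> R.
Proof.
elim: n => [|n IH]; first by rewrite /En big1 ?mulr0 // => s _; rewrite Yp0 expr0n mulr0.
rewrite (En_ext R n.+1 (fun s => Yp s ^+ 2) (fun t => (fun s => Yp s ^+ 2) (restr t) * (fun _ : R => 1) (chg (t (inord n)) (t (inord n.+1)))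
   + (fun s => Yp s) (restr t) * (fun z => 2 * (z - 4/5)) (chg (t (inord n)) (t (inord n.+1)))
   + (fun _ => 1) (restr t) * (fun z => (z - 4/5) ^+ 2) (chg (t (inord n)) (t (inord n.+1)))));
  last by move=> s; rewrite Yp_step; ring.
by rewrite !EnD (En_step (fun s => Yp s ^+ 2) (fun _ : R => 1))
  (En_step (fun s => Yp s) (fun z : R => 2 * (z - 4/5)))
  (En_step (fun _ => 1) (fun z : R => (z - 4/5) ^+ 2)) IH mom0 mom1 -natr1; field.
Qed.

Lemma mom4 {R : realType} n : En n (fun s => Yp s ^+ 4) <= n%:R ^+ 2 :> R.
Proof.
elim: n => [|n IH]; first by rewrite /En big1 ?expr0n // => s _; rewrite Yp0 expr0n mulr0.
rewrite (En_ext R n.+1 (fun s => Yp s ^+ 4) (fun t => (fun s => Yp s ^+ 4) (restr t) * (fun _ : R => 1) (chg (t (inord n)) (t (inord n.+1)))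
   + (fun s => Yp s ^+ 3) (restr t) * (fun z => 4 * (z - 4/5)) (chg (t (inord n)) (t (inord n.+1)))
   + (fun s => Yp s ^+ 2) (restr t) * (fun z => 6 * (z - 4/5) ^+ 2) (chg (t (inord n)) (t (inord n.+1)))
   + (fun s => Yp s) (restr t) * (fun z => 4 * (z - 4/5) ^+ 3) (chg (t (inord n)) (t (inord n.+1)))
   + (fun _ => 1) (restr t) * (fun z => (z - 4/5) ^+ 4) (chg (t (inord n)) (t (inord n.+1)))));
  last by move=> s; rewrite Yp_step; ring.
rewrite !EnD (En_step (fun s => Yp s ^+ 4) (fun _ : R => 1))
  (En_step (fun s => Yp s ^+ 3) (fun z : R => 4 * (z - 4/5)))
  (En_step (fun s => Yp s ^+ 2) (fun z : R => 6 * (z - 4/5) ^+ 2))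
  (En_step (fun s => Yp s) (fun z : R => 4 * (z - 4/5) ^+ 3))
  (En_step (fun _ => 1) (fun z : R => (z - 4/5) ^+ 4)) mom0 mom1 mom2 -[n.+1%:R]natr1.
have n0 : 0 <= n%:R :> R by [].
set m4 := En n (fun s => Yp s ^+ 4) in IH *.
set m3 := En n _.
have -> : m3 * (4 * (0 - 4 / 5) / 5 + 4 * (4 * (1 - 4 / 5)) / 5) = 0 by field.
have -> : (1 / 5 + 4 * 1 / 5) = 1 :> R by field.
have -> : 6 * (0 - 4 / 5) ^+ 2 / 5 + 4 * (6 * (1 - 4 / 5) ^+ 2) / 5 = 24/25 :> R by field.
have -> : (0 - 4 / 5) ^+ 4 / 5 + 4 * (1 - 4 / 5) ^+ 4 / 5 = 52/625 :> R by field.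
rewrite mul0r mul1r mulr1 addr0; nra.
Qed.

Lemma mU_seq d (Omega : measurableType d) (R : realType) (mu : {measure set Omega -> \bar R})
  (T : choiceType) (F : T -> set Omega) (r : seq T) (Q : pred T) :
  uniq r -> (forall s, measurable (F s)) -> (forall s t, s != t -> F s `&` F t = set0) ->
  mu (\big[setU/set0]_(s <- r | Q s) F s) = (\sum_(s <- r | Q s) mu (F s))%E.
Proof.
elim: r => [|a r IH] /=; first by rewrite !big_nil measure0.
move=> /andP[anr ur] mF dF; rewrite !big_cons; case: ifP => Qa; last exact: IH.
rewrite measureU //; [by congr (_ + _)%E; apply: IH | exact: bigsetU_measurable | ].
rewrite -bigcup_seq_cond; apply/seteqP; split => [x [Fax [t /andP[tr _] Ftx]]|x []] //.
have : a != t by apply: contraNneq anr => ->.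
by move/dF/seteqP => [+ _] => /(_ x) /=; apply.
Qed.

Definition cyl {Omega : Type} (I : nat -> Omega -> 'I_2) n (s : pth n) :=
  [set w | forall k : 'I_n.+1, I k w = s k].
Definition pathof {Omega : Type} (I : nat -> Omega -> 'I_2) n w : pth n := [ffun k : 'I_n.+1 => I k w].

Lemma cyl_meas d (Omega : measurableType d) (I : nat -> Omega -> 'I_2) n (s : pth n) :
  (forall n (i : 'I_2), measurable (I n @^-1` [set i])) -> measurable (cyl I s).
Proof.
move=> mI.
have -> : cyl I s = \bigcap_(k in [set: nat])
   (if (k < n.+1)%N then I k @^-1` [set s (inord k)] else setT).
  apply/seteqP; split => [w H k _|w H k] /=.
    by case: ifP => // hk; rewrite /preimage /= -H inordK.
  have := H (nat_of_ord k) Logic.I; rewrite ltn_ord /preimage /= => ->.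
  by rewrite inord_val.
apply: bigcap_measurableType => k _; case: ifP => _ //; exact: mI.
Qed.

Lemma event_union {Omega : Type} (I : nat -> Omega -> 'I_2) n (Q : pred (pth n)) :
  [set w | Q (pathof I n w)] = \big[setU/set0]_(s <- index_enum (pth n) | Q s) cyl I s.
Proof.
rewrite -bigcup_seq_cond; apply/seteqP; split => [w Hw|w [t /andP[_ Qt] Ht]] /=.
  exists (pathof I n w); first by rewrite /= mem_index_enum; exact: Hw.
  by move=> k; rewrite ffunE.
suff -> : pathof I n w = t by [].
by apply/ffunP => k; rewrite ffunE Ht.
Qed.

Lemma pw_ge0 (R : realType) n (s : pth n) : 0 <= pw n s :> R.
Proof.
rewrite /pw mulr_ge0 //; apply: prodr_ge0 => k _; rewrite /trans; case: ifP => _ //.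
Qed.

Lemma prob_event d (Omega : measurableType d) (R : realType) (P : probability Omega R)
  (I : nat -> Omega -> 'I_2) (HM : stationary_markov_chain P I) n (Q : pred (pth n)) :
  P [set w | Q (pathof I n w)] = (\sum_(s | Q s) pw n s)%:E.
Proof.
case: HM => mI HP.
rewrite event_union mU_seq //.
- rewrite -sumEFin; apply: eq_bigr => s _; exact: (HP n (fun k => s k)).
- exact: index_enum_uniq.
- by move=> s; apply: cyl_meas.
- move=> s t; apply: contra_neqP => /eqP/set0P [w [Hs Ht]].
  by apply/ffunP => k; rewrite -Hs -Ht.
Qed.

Lemma tail_bound d (Omega : measurableType d) (R : realType) (P : probability Omega R)
  (I : nat -> Omega -> 'I_2) (HM : stationary_markov_chain P I) n (thr : R) : 0 < thr ->
  (P [set w | (thr < `|Yp (pathof I n w)|)%R] <= (n%:R ^+ 2 / thr ^+ 4)%:E)%E.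
Proof.
move=> thr0.
rewrite (prob_event HM (fun s => thr < `|Yp s|)) lee_fin.
have Y4 : forall s : pth n, Yp s ^+ 4 = `|Yp s| ^+ 4 :> R.
  by move=> s; rewrite -normrX ger0_norm // exprn_even_ge0.
apply: (@le_trans _ _ (\sum_s pw n s * (Yp s ^+ 4 / thr ^+ 4))).
  rewrite [leRHS](bigID (fun s => thr < `|Yp s|)) /= -[leLHS]addr0.
  apply: lerD; last first.
    by apply: sumr_ge0 => s _; rewrite mulr_ge0 ?pw_ge0 // divr_ge0 // ?exprn_even_ge0 // exprn_ge0 // ltW.
  apply: ler_sum => s hs; rewrite -[leLHS]mulr1 ler_wpM2l ?pw_ge0 //.
  rewrite ler_pdivlMr ?exprn_gt0 // mul1r Y4 lerXn2r // ?inE ?ltW //.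
  by rewrite nnegrE ltW.
rewrite (eq_bigr (fun s => (pw n s * Yp s ^+ 4) * (thr ^+ 4)^-1)); last by move=> s _; rewrite mulrA.
rewrite -mulr_suml; apply: ler_wpM2r; first by rewrite invr_ge0 exprn_ge0 // ltW.
exact: mom4.
Qed.

Lemma partial_inv_sq (R : realType) (c : R) N : 0 <= c ->
  \sum_(0 <= i < N) c / (i.+1%:R ^+ 2) <= c * (2 - 2 / N.+1%:R).
Proof.
move=> c0; elim: N => [|N IH].
  by rewrite big_geq // mulrC divr1 subrr mul0r.
rewrite big_nat_recr //=; apply: (le_trans (lerD IH (lexx _))).
rewrite -subr_ge0.
have -> : c * (2 - 2 / N.+2%:R) - (c * (2 - 2 / N.+1%:R) + c / N.+1%:R ^+ 2)
  = c * (N%:R / (N.+1%:R ^+ 2 * N.+2%:R)).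
  by rewrite -[N.+2%:R]natr1 -[N.+1%:R]natr1; field; rewrite -?natr1 ?natrD; apply/andP; split;
    rewrite ?(natr1) ?pnatr_eq0 //.
by rewrite mulr_ge0 // divr_ge0 // mulr_ge0 // exprn_ge0.
Qed.

Lemma inv_sq_series (R : realType) (c : R) : 0 <= c ->
  (\sum_(n <oo) ((c / (n.+1%:R ^+ 2))%:E) <= (2 * c)%:E)%E.
Proof.
move=> c0; apply: lime_le.
  by apply: is_cvg_nneseries => k _ _; rewrite lee_fin divr_ge0 // exprn_ge0.
apply: nearW => N; rewrite sumEFin lee_fin.
apply: (le_trans (partial_inv_sq N c0)).
by rewrite mulrC ler_wpM2r // gerBl divr_ge0.
Qed.

Lemma bound_ineq_gen (R : realType) (x y : R) : 1 <= x -> 0 < y ->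
  x ^+ 2 / (x / y) ^+ 4 <= 4 * y ^+ 4 / (x + 1) ^+ 2.
Proof.
move=> hx hy.
have x0 : x != 0 by rewrite gt_eqF // (lt_le_trans ltr01).
have x1 : x + 1 != 0 by rewrite gt_eqF // ltr_wpDl // ?(le_trans ler01) //.
have y0 : y != 0 by rewrite gt_eqF.
have -> : x ^+ 2 / (x / y) ^+ 4 = y ^+ 4 / x ^+ 2.
  by field; rewrite ?x0 ?x1 ?y0.
rewrite -subr_ge0.
have -> : 4 * y ^+ 4 / (x + 1) ^+ 2 - y ^+ 4 / x ^+ 2 =
  y ^+ 4 * ((4 * x ^+ 2 - (x + 1) ^+ 2) / (x ^+ 2 * (x + 1) ^+ 2)).
  by field; rewrite ?x0 ?x1 ?y0.
apply: mulr_ge0; first exact: exprn_even_ge0.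
apply: divr_ge0; last by apply: mulr_ge0; apply: exprn_even_ge0.
rewrite subr_ge0; nra.
Qed.

Lemma bound_ineq (R : realType) (m k : nat) :
  k.+1%:R ^+ 2 / (k.+1%:R / m.+1%:R) ^+ 4 <= 4 * m.+1%:R ^+ 4 / k.+2%:R ^+ 2 :> R.
Proof. by rewrite -[k.+2%:R]natr1; apply: bound_ineq_gen; rewrite ?ler1n. 
Qed.

Lemma ae_m d (Omega : measurableType d) (R : realType) (P : probability Omega R)
  (I : nat -> Omega -> 'I_2) (HM : stationary_markov_chain P I) (m : nat) :
  \forall w \ae P, \forall n \near \oo, `|Yp (pathof I n w)| <= n%:R / m.+1%:R :> R.
Proof.
pose A n := [set w | (n%:R / m.+1%:R < `|Yp (pathof I n w)| :> R)%R].
have mA : forall n, measurable (A n).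
  move=> n; rewrite /A (event_union I (fun s => (n%:R / m.+1%:R < `|Yp s| :> R)%R)).
  by apply: bigsetU_measurable => s _; apply: cyl_meas; case: HM.
have bA : forall n, (P (A n) <= ((4 * m.+1%:R ^+ 4) / n.+1%:R ^+ 2)%:E)%E.
  case=> [|k].
    have -> : A 0%N = set0.
      by apply/seteqP; split => w //=; rewrite /A /= Yp0 normr0 mul0r ltxx.
    by rewrite measure0 lee_fin divr_ge0 ?mulr_ge0 ?exprn_ge0.
  apply: (le_trans (tail_bound HM _ _)); first by rewrite divr_gt0.
  by rewrite lee_fin; exact: bound_ineq.
have sA : (\sum_(n <oo) P (A n) < +oo)%E.
  have c0 : 0 <= 4 * m.+1%:R ^+ 4 :> R by rewrite mulr_ge0 // exprn_ge0.
  apply: (le_lt_trans _ (ltry (2 * (4 * m.+1%:R ^+ 4)))).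
  apply: (le_trans _ (inv_sq_series c0)).
  apply: lee_nneseries.
  - by move=> n _ _; exact: measure_ge0.
  - by move=> n _; exact: bA.
have P0 := lim_sup_set_cvg0 mA sA.
exists (lim_sup_set A); split => //.
  by apply: bigcap_measurableType => n _; apply: bigcup_measurable => j _.
move=> w /= Hw; move=> n _.
apply: contrapT => Hn; apply: Hw; exists n => // j /= hj.
rewrite leNgt; apply/negP => Hj; apply: Hn; exists j => //.
Qed.

Definition uu {R : realType} (a i : 'I_2) : R :=
  if a == ord0 then (if i == ord0 then 1 else 0) else (if i == ord0 then 100 else 999/100).
Definition vv {R : realType} (b j : 'I_2) : R :=
  if b == ord0 then (if j == ord0 then 1/10 else 0) else (if j == ord0 then 1 else -10).
Definition Mab {R : realType} (a b : 'I_2) : 'M[R]_2 := \matrix_(i < 2, j < 2) (uu a i * vv b j).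
Definition cc {R : realType} (a b : 'I_2) : R :=
  if a == b then 1/10 else if a == ord0 then 1 else 10.

Lemma Bst_M (R : realType) b : Bst b = Mab b b :> 'M[R]_2.
Proof.
apply/matrixP => i j; rewrite /Bst /Mab !mxE /uu /vv.
case: b => [[|[|?]] ?] //=; case: i => [[|[|?]] ?] //=; case: j => [[|[|?]] ?] //=;
  rewrite ?mxE /=; by field.
Qed.

Lemma MM (R : realType) a b e : Mab b b *m Mab a e = cc a b *: Mab b e :> 'M[R]_2.
Proof.
apply/matrixP => i j; rewrite !mxE !big_ord_recl big_ord0 !mxE /uu /vv /cc.
case: a => [[|[|?]] ?] //=; case: b => [[|[|?]] ?] //=; case: e => [[|[|?]] ?] //=;
  case: i => [[|[|?]] ?] //=; case: j => [[|[|?]] ?] //=; by field.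
Qed.

Definition alpha {Omega : Type} {R : realType} (I : nat -> Omega -> 'I_2) n w : R :=
  \prod_(k < n) cc (I k.+1 w) (I k.+2 w).

Lemma Aprod_formula {Omega : Type} {R : realType} (I : nat -> Omega -> 'I_2) n w :
  Aprod I n.+1 w = alpha I n w *: Mab (I n.+1 w) (I 1%N w) :> 'M[R]_2.
Proof.
elim: n => [|n IH].
  by rewrite /= mulmx1 /alpha big_ord0 scale1r Bst_M.
rewrite (_ : Aprod I n.+2 w = Bst (I n.+2 w) *m Aprod I n.+1 w) //.
rewrite IH Bst_M -scalemxAr MM scalerA /alpha big_ord_recr /=.
by rewrite mulrC.
Qed.

Lemma cc_gt0 (R : realType) a b : 0 < cc a b :> R.
Proof. by rewrite /cc; case: ifP => _ //; case: ifP. Qed.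

Lemma alpha_gt0 {Omega : Type} {R : realType} (I : nat -> Omega -> 'I_2) n w : 0 < alpha I n w :> R.
Proof. by apply: prodr_gt0 => k _; exact: cc_gt0. Qed.

Lemma Mab_neq0 (R : realType) a b : Mab a b != 0 :> 'M[R]_2.
Proof.
have : Mab a b ord0 ord0 != 0 :> R.
  rewrite mxE /uu /vv /=.
  by case: ifP => _; case: ifP => _; rewrite mulf_neq0.
by apply: contraNneq => ->; rewrite mxE.
Qed.

Definition phi {R : realType} (a : 'I_2) : R := if a == ord0 then 1 else 0.

Lemma ln_cc (R : realType) a b :
  ln (cc a b) = ln (10 : R) * (3/2 * chg a b - 1 + 1/2 * (phi b - phi a)).
Proof.
rewrite /cc /chg /phi.
case: a => [[|[|?]] ?] //=; case: b => [[|[|?]] ?] //=.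
- by rewrite div1r lnV ?posrE //; field.
- by rewrite ln1; field.
- by field.
- by rewrite div1r lnV ?posrE //; field.
Qed.

Lemma I2_cases (a : 'I_2) : a = ord0 \/ a = ord_max.
Proof. by case: a => [[|[|?]] ?] //; [left|right]; apply/val_inj. Qed.

Lemma chg_bnd (R : realType) a b : 0 <= (chg a b : R) <= 1.
Proof. by rewrite /chg; case: ifP => _; rewrite ?lexx ?ler01. Qed.

Lemma phi_bnd (R : realType) a : 0 <= (phi a : R) <= 1.
Proof. by rewrite /phi; case: ifP => _; rewrite ?lexx ?ler01. Qed.

Definition KM (R : realType) : R :=
  `|ln `|Mab ord0 ord0 : 'M[R]_2| | + `|ln `|Mab ord0 ord_max : 'M[R]_2| | +
  `|ln `|Mab ord_max ord0 : 'M[R]_2| | + `|ln `|Mab ord_max ord_max : 'M[R]_2| |.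

Lemma KM_bnd (R : realType) a b : `|ln `|Mab a b : 'M[R]_2| | <= KM R.
Proof.
rewrite /KM.
have h1 := normr_ge0 (ln `|Mab ord0 ord0 : 'M[R]_2|).
have h2 := normr_ge0 (ln `|Mab ord0 ord_max : 'M[R]_2|).
have h3 := normr_ge0 (ln `|Mab ord_max ord0 : 'M[R]_2|).
have h4 := normr_ge0 (ln `|Mab ord_max ord_max : 'M[R]_2|).
by case: (I2_cases a) => ->; case: (I2_cases b) => ->; lra.
Qed.

Lemma ln_alpha {Omega : Type} {R : realType} (I : nat -> Omega -> 'I_2) n w :
  ln (alpha I n w) = \sum_(k < n) ln (cc (I k.+1 w) (I k.+2 w)) :> R.
Proof.
elim: n => [|n IH]; first by rewrite /alpha big_ord0 ln1 big_ord0.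
rewrite /alpha big_ord_recr lnM ?posrE ?cc_gt0 //; last exact: alpha_gt0.
by rewrite -/(alpha I n w) IH big_ord_recr.
Qed.

Lemma sum_lin (R : realType) (c : R) n (f g : nat -> R) :
  \sum_(k < n) c * (3/2 * f k - 1 + 1/2 * g k) =
  c * (3/2 * \sum_(k < n) f k - n%:R + 1/2 * \sum_(k < n) g k).
Proof.
elim: n => [|n IH]; first by rewrite !big_ord0; ring.
by rewrite !big_ord_recr IH /= -natr1; ring.
Qed.

Lemma tele (R : realType) n (f : nat -> R) :
  \sum_(k < n) (f k.+1 - f k) = f n - f 0%N.
Proof.
elim: n => [|n IH]; first by rewrite big_ord0 subrr.
by rewrite big_ord_recr IH /=; ring.
Qed.

Lemma Yp_path {Omega : Type} {R : realType} (I : nat -> Omega -> 'I_2) n w :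
  Yp (pathof I n.+1 w) = chg (I 0%N w) (I 1%N w) + \sum_(k < n) chg (I k.+1 w) (I k.+2 w)
     - 4/5 * n.+1%:R :> R.
Proof.
rewrite /Yp.
rewrite (eq_bigr (fun k : 'I_n.+1 => chg (I k w) (I k.+1 w) - 4/5)); last first.
  move=> k _; rewrite !ffunE !inordK //; have := ltn_ord k; lia.
rewrite big_split /= sumr_const card_ord big_ord_recl /=.
rewrite (eq_bigr (fun k : 'I_n => chg (I k.+1 w) (I k.+2 w))) //.
by rewrite -mulr_natr; ring.
Qed.

Lemma main_est {Omega : Type} {R : realType} (I : nat -> Omega -> 'I_2) n w :
  `|ln `|Aprod I n.+1 w| - ln 10 * (3/2 * Yp (pathof I n.+1 w) + n.+1%:R / 5)|
    <= 3 * ln 10 + KM R.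
Proof.
have l10 : 0 < ln (10 : R) by rewrite ln_gt0 // ltr1n.
rewrite Aprod_formula normrZ gtr0_norm ?alpha_gt0 //.
rewrite lnM ?posrE ?alpha_gt0 ?normr_gt0 ?Mab_neq0 //.
rewrite ln_alpha.
under eq_bigr do rewrite ln_cc.
rewrite (sum_lin _ _ (fun k => chg (I k.+1 w) (I k.+2 w)) (fun k => phi (I k.+2 w) - phi (I k.+1 w))).
rewrite (tele _ (fun k => phi (I k.+1 w))) Yp_path.
set S := \sum_(k < n) _.
set L := ln `|Mab _ _|.
have hL : `|L| <= KM R by exact: KM_bnd.
have := chg_bnd R (I 0%N w) (I 1%N w); have := phi_bnd R (I n.+1 w); have := phi_bnd R (I 1%N w).
move=> /andP[p1 p1'] /andP[p2 p2'] /andP[c1 c1'].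
set c0 := chg _ _ in c1 c1' *; set pa := phi (I n.+1 w) in p2 p2' *; set pb := phi (I 1%N w) in p1 p1' *.
have -> : ln 10 * (3 / 2 * S - n%:R + 1 / 2 * (pa - pb)) + L -
   ln 10 * (3 / 2 * (c0 + S - 4 / 5 * n.+1%:R) + n.+1%:R / 5) =
   ln 10 * (1 + 1/2 * (pa - pb) - 3/2 * c0) + L.
  by rewrite -natr1; field.
apply: (le_trans (ler_normD _ _)).
rewrite normrM gtr0_norm //.
have : `|1 + 1 / 2 * (pa - pb) - 3 / 2 * c0| <= 3 :> R.
  rewrite ler_norml; apply/andP; split; lra.
move=> h; have : ln 10 * `|1 + 1 / 2 * (pa - pb) - 3 / 2 * c0| <= ln 10 * 3.
  by rewrite ler_pM2l.
move=> h'; lra.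
Qed.

Lemma KM_ge0 (R : realType) : 0 <= KM R.
Proof. by rewrite /KM !addr_ge0. Qed.

Lemma final_cvg {Omega : Type} {R : realType} (I : nat -> Omega -> 'I_2) w :
  (forall m : nat, \forall n \near \oo, `|Yp (pathof I n w)| <= n%:R / m.+1%:R :> R) ->
  (fun n : nat => (n%:R)^-1 * ln `|@Aprod Omega R I n w|) @ \oo --> (1/5) * ln (10 : R).
Proof.
move=> HY; apply/cvgrPdist_le => e e0.
have l10 : 0 < ln (10 : R) by rewrite ln_gt0 // ltr1n.
pose c := 3/2 * ln (10 : R).
have c0 : 0 < c by rewrite mulr_gt0.
pose K := 3 * ln 10 + KM R.
have K0 : 0 <= K by rewrite addr_ge0 ?KM_ge0 // mulr_ge0 // ltW.
pose m := Num.trunc (2 * c / e).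
have hm : 2 * c / e < m.+1%:R := truncnS_gt _.
pose q := (m.+1%:R : R)^-1.
have q0 : 0 < q by rewrite invr_gt0.
have hq : c * q <= e / 2.
  have M0 : 0 < m.+1%:R :> R by [].
  have h2 : 2 * c < e * m.+1%:R by move: hm; rewrite ltr_pdivrMr // [e * _]mulrC.
  rewrite /q ler_pdivrMr //; nra.
apply: filterS2 (HY m) (nbhs_infty_ger (Num.max 1 (2 * K / e))) => n hY hn.
case: n hY hn => [|k] hY hn.
  by move: hn; rewrite ge_max ler10.
have hD := @main_est Omega R I k w.
move: hn; rewrite ge_max => /andP[hx1 hxK].
set x := k.+1%:R in hY hD hx1 hxK *.
set Y := Yp _ in hY hD *.
set A := ln _ in hD *.
have x0 : 0 < x by rewrite (lt_le_trans ltr01).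
have hK : K <= e / 2 * x.
  by move: hxK; rewrite ler_pdivrMr // -/K => h; lra.
have hY' : `|Y| <= x * q by [].
have -> : 1 / 5 * ln 10 - x^-1 * A = - (x^-1 * ((A - ln 10 * (3/2 * Y + x/5)) + c * Y)).
  by rewrite /c; field; rewrite gt_eqF.
rewrite normrN normrM gtr0_norm ?invr_gt0 // mulrC ler_pdivrMr //.
apply: (le_trans (ler_normD _ _)).
rewrite normrM (gtr0_norm c0).
have h1 : c * `|Y| <= c * (x * q) by rewrite ler_pM2l.
have h2 : c * (x * q) <= e / 2 * x by nra.
move: hD; rewrite -/K => hD.
lra.
Qed.

Theorem mainTheorem7 (d : measure_display) (Omega : measurableType d)
  (R : realType) (P : probability Omega R) (I : nat -> Omega -> 'I_2) :
  stationary_markov_chain P I ->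
  [/\ is_spectral_radius (@B1 algC) (1 / 10),
      is_spectral_radius (@B2 algC) (1 / 10),
      (1 / 10 : algC) < 1,
      (0 : R) < (1 / 5) * ln 10 &
      {ae P, forall w,
         (fun n : nat => (n%:R)^-1 * ln `|@Aprod Omega R I n w|) @ \oo
           --> (1 / 5) * ln (10 : R)}].
Proof.
move=> HM; split.
- exact: sr_B1.
- exact: sr_B2.
- by rewrite mul1r invf_lt1 // ltr1n.
- by rewrite mulr_gt0 // ln_gt0 // ltr1n.
- have H := ae_foralln (fun m => ae_m HM m).
  apply: filterS H => w Hw; exact: final_cvg Hw.
Qed.
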